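(* Let $p$ be an odd prime, $r=(p-1)/2$, $\zeta_p=e^{2\pi i/p}$, $\varepsilon=(-1)^{(p-1)/2}$, and let $Q$ be either $Q_1(x)=x^2/p$ or $Q_2(x)=cx^2/p$ with $c$ a fixed quadratic non-residue mod $p$; let $B(x,y)=Q(x+y)-Q(x)-Q(y)$ and $G_Q=\sum_{x\in\mathbb{Z}/p\mathbb{Z}}e^{2\pi iQ(x)}$. Define $(r+1)\times(r+1)$ matrices indexed by $0\le j,k\le r$: $T=\operatorname{diag}(\theta_0,\dots,\theta_r)$ with $\theta_j=e^{2\pi iQ(j)}$, and $S$ with $S_{j0}=1/G_Q$ for all $j$, $S_{0k}=2/G_Q$ for $1\le k\le r$, and $S_{jk}=\frac{1}{G_Q}\left(e^{-2\pi iB(j,k)}+e^{2\pi iB(j,k)}\right)$ for $1\le j,k\le r$. Let $\xi:\mathrm{SL}_2(\mathbb{F}_p)\to\mathrm{GL}_{r+1}(\mathbb{Q}(\zeta_p))$ be the representation with $\xi(\mathfrak{s})=S$, $\xi(\mathfrak{t})=T$, where $\mathfrak{s}=\begin{pmatrix}0&-1\\1&0\end{pmatrix}$, $\mathfrak{t}=\begin{pmatrix}1&1\\0&1\end{pmatrix}$. Let $\gamma$ be a generator of the cyclic group $\mathrm{Gal}(\mathbb{Q}(\zeta_p)/\mathbb{Q})$, let $\tau=\gamma^2$, and let $V_Q$ be the Vandermonde matrix with $(j,k)$ entry $\theta_j^{\,k}$ ($0\le j,k\le r$). Then $\tau$ permutes $\{\theta_0,\dots,\theta_r\}$ fixing $\theta_0=1$,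 so there is a unique permutation matrix $P$ with $\tau(V_Q)=P\,V_Q$; and for every $g\in\mathrm{SL}_2(\mathbb{F}_p)$ one has $\tau(\xi(g))=P\,\xi(g)\,P^{-1}$.
   Context: For $\alpha\in\mathrm{Gal}(\mathbb{Q}(\zeta_p)/\mathbb{Q})$ and a matrix $M$ with entries in $\mathbb{Q}(\zeta_p)$, $\alpha(M)$ denotes the matrix obtained by applying $\alpha$ to each entry. The matrices $S,T$ are the matrices of the Weil representation attached to $Q$ restricted to the subspace of even functions $\mathbb{Z}/p\mathbb{Z}\to\mathbb{C}$, in the basis $\delta_0,\ \delta_1+\delta_{p-1},\dots,\delta_r+\delta_{r+1}$; $\xi$ is the principal series Weil representation of dimension $(p+1)/2$ ($\xi_1$ for $Q_1$, $\xi_2$ for $Q_2$). One has $G_{Q}=\pm\sqrt{\varepsilon p}$, where $\sqrt{\varepsilon p}=\sum_x \zeta_p^{x^2}$. *)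

(* Defs.v *)
From HB Require Import structures.
From mathcomp Require Import all_boot all_order all_algebra all_fingroup all_field.
Set Implicit Arguments. Unset Strict Implicit. Unset Printing Implicit Defensive.
Import Order.TTheory GRing.Theory Num.Theory.
Local Open Scope ring_scope.

(* zeta_p = e^{2 pi i/p} in algC: p.-root (-1) is e^{i pi/p} (minimal nonneg
   argument), so its square is e^{2 pi i / p}. *)
Definition zeta (p : nat) : algC := (p.-root (-1)) ^+ 2.

Definition rr (p : nat) : nat := (p.-1)./2.

Definition qnr (p c : nat) : bool :=
  (c %% p != 0)%N && [forall x : 'I_p, (x * x %% p != c %% p)%N].

(* Q(x) = a x^2 / p ;  e(Q(x)) = e^{2 pi i Q(x)} = zeta^(a x^2) *)
Definition eQ (p a x : nat) : algC := zeta p ^+ (a * x ^ 2).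

(* e^{2 pi i B(j,k)} with B(j,k) = 2 a j k / p *)
Definition eB (p a j k : nat) : algC := zeta p ^+ (2 * a * j * k).

Definition GQ (p a : nat) : algC := \sum_(x < p) eQ p a x.

Definition theta (p a j : nat) : algC := eQ p a j.

Definition Tmx (p a : nat) : 'M[algC]_((rr p).+1) :=
  diag_mx (\row_(j < (rr p).+1) theta p a j).

Definition Smx (p a : nat) : 'M[algC]_((rr p).+1) :=
  \matrix_(j < (rr p).+1, k < (rr p).+1)
    if (k == 0 :> nat) then (GQ p a)^-1
    else if (j == 0 :> nat) then 2 / GQ p a
    else ((eB p a j k)^-1 + eB p a j k) / GQ p a.

Definition Vmx (p a : nat) : 'M[algC]_((rr p).+1) :=
  \matrix_(j < (rr p).+1, k < (rr p).+1) theta p a j ^+ k.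

Definition inSL2 (p : nat) (g : 'M['F_p]_2) : Prop := \det g = 1.

Definition mat_s (p : nat) : 'M['F_p]_2 :=
  \matrix_(i < 2, j < 2)
    if (i == 0 :> nat) && (j == 1 :> nat) then -1
    else if (i == 1 :> nat) && (j == 0 :> nat) then 1 else 0.

Definition mat_t (p : nat) : 'M['F_p]_2 :=
  \matrix_(i < 2, j < 2)
    if (i == j) || ((i == 0 :> nat) && (j == 1 :> nat)) then 1 else 0.

Definition is_rep (p n : nat) (xi : 'M['F_p]_2 -> 'M[algC]_n) : Prop :=
  (forall g, inSL2 g -> xi g \in unitmx) /\
  (forall g h, inSL2 g -> inSL2 h -> xi (g *m h) = xi g *m xi h).

(* Main.v *)
Require Import Defs.
From HB Require Import structures.
From mathcomp Require Import all_boot all_order all_algebra all_fingroup all_field.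
From mathcomp Require Import ring lra zify.
Import Order.TTheory GRing.Theory Num.Theory.
Set Implicit Arguments. Unset Strict Implicit. Unset Printing Implicit Defensive.
Local Open Scope ring_scope.

Lemma zeta_prim p : prime p -> odd p -> p.-primitive_root (zeta p).
Proof.
move=> pr_p odd_p; have p_gt1 := prime_gt1 pr_p; have p_gt0 := ltnW p_gt1.
pose w : algC := p.-root (-1); have zw : zeta p = w ^+ 2 by [].
have wp : w ^+ p = -1 by rewrite /w rootCK.
have zp : zeta p ^+ p = 1 by rewrite zw -exprM mulnC exprM wp sqrrN expr1n.
have [m pm mdvd] := prim_order_exists p_gt0 zp.
have [] := primeP pr_p => _ /(_ m mdvd) /orP[/eqP m1|/eqP mp]; last by rewrite mp in pm.
exfalso; move: pm; rewrite m1 => /(prim_expr_order) ; rewrite expr1 zw => w2.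
have : (w - 1) * (w + 1) = 0 by rewrite mulrDr !mulrBl -expr2 w2; ring.
move/eqP; rewrite mulf_eq0 => /orP[|].
  rewrite subr_eq0 => /eqP w1; move: wp; rewrite w1 expr1n => /(congr1 (fun x => x + 1)); rewrite addNr => /eqP.
  by rewrite (_ : 1 + 1 = 2%:R) // pnatr_eq0.
rewrite addr_eq0 => /eqP wN.
have : (w < 0) = false by rewrite /w rootC_lt0.
by rewrite wN oppr_lt0 ltr01.
Qed.

Lemma Fp_eqmod p m n : prime p -> (m%:R : 'F_p) = n%:R -> m = n %[mod p].
Proof. by move=> pr_p /(congr1 val); rewrite /= !val_Fp_nat. Qed.

Lemma Fp_eqmodE p m n : prime p -> m = n %[mod p] -> (m%:R : 'F_p) = n%:R.
Proof. by move=> pr_p H; rewrite -Fp_nat_mod // H Fp_nat_mod. Qed.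

Lemma zeta_F p m n : prime p -> odd p ->
  (m%:R : 'F_p) = n%:R -> zeta p ^+ m = zeta p ^+ n.
Proof.
move=> pr_p odd_p /(Fp_eqmod pr_p) H.
by apply/eqP; rewrite (eq_prim_root_expr (zeta_prim pr_p odd_p)) H.
Qed.

Lemma zeta_Finj p m n : prime p -> odd p ->
  zeta p ^+ m = zeta p ^+ n -> (m%:R : 'F_p) = n%:R.
Proof.
move=> pr_p odd_p /eqP; rewrite (eq_prim_root_expr (zeta_prim pr_p odd_p)).
by move/eqP; apply: Fp_eqmodE.
Qed.

Lemma zeta_neq0 p n : prime p -> odd p -> zeta p ^+ n != 0.
Proof.
move=> pr_p odd_p; rewrite expf_neq0 // (prim_root_eq0 (zeta_prim pr_p odd_p)).
by rewrite -lt0n prime_gt0.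
Qed.

Lemma zeta_FN p m n : prime p -> odd p ->
  (m%:R : 'F_p) = - n%:R -> zeta p ^+ m = (zeta p ^+ n)^-1.
Proof.
move=> pr_p odd_p H.
have H1 : ((m + n)%:R : 'F_p) = 0%:R by rewrite natrD H addNr.
have := zeta_F pr_p odd_p H1; rewrite expr0 exprD => H2.
rewrite -[zeta p ^+ m](mulrK (x := zeta p ^+ n)) ?unitfE ?zeta_neq0 //.
by rewrite H2 div1r.
Qed.

Definition sig p g (j : nat) : nat :=
  let m := ((j * g) %% p)%N in if (m <= rr p)%N then m else (p - m)%N.

Lemma p_rr p : odd p -> p = ((rr p).*2).+1.
Proof.
move=> odd_p; rewrite /rr halfK; case: p odd_p => //= n; rewrite /=; case: (odd n) => //= _.
by rewrite subn0.
Qed.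

Lemma sig_le p g j : prime p -> odd p -> (sig p g j <= rr p)%N.
Proof.
move=> pr_p odd_p; rewrite /sig; case: ifP => // /negbT; rewrite -ltnNge.
have := p_rr odd_p; have : ((j * g) %% p < p)%N by rewrite ltn_mod prime_gt0.
rewrite -mul2n; lia.
Qed.

Lemma sig_F p g j : prime p ->
  ((sig p g j)%:R : 'F_p) = (j * g)%:R \/ ((sig p g j)%:R : 'F_p) = - (j * g)%:R.
Proof.
move=> pr_p; rewrite /sig; case: ifP => _; first by left; rewrite Fp_nat_mod.
right; rewrite natrB ?pchar_Fp_0 ?sub0r ?Fp_nat_mod //.
by rewrite ltnW // ltn_mod prime_gt0.
Qed.

Lemma theta_inj p a j k : prime p -> odd p -> (a%:R : 'F_p) != 0 ->
  (j <= rr p)%N -> (k <= rr p)%N -> theta p a j = theta p a k -> j = k.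
Proof.
move=> pr_p odd_p a0 hj hk /(zeta_Finj pr_p odd_p).
rewrite !natrM -!expr2 => /(mulfI a0) /eqP; rewrite -subr_eq0 subr_sqr mulf_eq0.
case/orP => /eqP.
  move/eqP; rewrite subr_eq0 => /eqP /(Fp_eqmod pr_p).
  have := p_rr odd_p => hp.
  by rewrite !modn_small //; lia.
rewrite -natrD => /eqP; rewrite -(dvdn_pcharf (pchar_Fp pr_p)).
have := p_rr odd_p => hp.
case: (posnP (j + k)) => [|pos /(dvdn_leq pos)]; lia.
Qed.
Definition mx2 (R : Type) (a b c d : R) : 'M[R]_2 :=
  \matrix_(i < 2, j < 2) if (i == 0 :> nat) then (if (j == 0 :> nat) then a else b)
                         else (if (j == 0 :> nat) then c else d).

Lemma mx2_eta (R : Type) (A : 'M[R]_2) : A = mx2 (A 0 0) (A 0 1) (A 1 0) (A 1 1).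
Proof.
by apply/matrixP => i j; rewrite !mxE; case: i j => [[|[|i]] hi] [[|[|j]] hj] //=;
  congr (A _ _); apply: val_inj.
Qed.

Lemma mx2_mul (R : pzRingType) (a b c d a' b' c' d' : R) :
  mx2 a b c d *m mx2 a' b' c' d' =
  mx2 (a * a' + b * c') (a * b' + b * d') (c * a' + d * c') (c * b' + d * d').
Proof.
apply/matrixP => i j; rewrite !mxE !big_ord_recl big_ord0 !mxE /=.
by case: i j => [[|[|i]] hi] [[|[|j]] hj] //=; rewrite addr0.
Qed.

Lemma det_mx2 (R : comPzRingType) (a b c d : R) : \det (mx2 a b c d) = a * d - b * c.
Proof.
rewrite (expand_det_row _ ord0) !big_ord_recl big_ord0 /cofactor !mxE /=.
rewrite !det_mx11 !mxE /=.
by rewrite /bump /= expr0 expr1 mul1r mulN1r addr0 mulrN.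
Qed.

Lemma mx2_eq (R : Type) (a b c d a' b' c' d' : R) :
  a = a' -> b = b' -> c = c' -> d = d' -> mx2 a b c d = mx2 a' b' c' d'.
Proof. by move=> -> -> -> ->. Qed.

Lemma mat_sE p : mat_s p = mx2 0 (-1) 1 0.
Proof. by apply/matrixP => i j; rewrite !mxE; case: i j => [[|[|i]] hi] [[|[|j]] hj]. Qed.

Lemma mat_tE p : mat_t p = mx2 1 1 0 1.
Proof. by apply/matrixP => i j; rewrite !mxE; case: i j => [[|[|i]] hi] [[|[|j]] hj]. Qed.

Lemma SL2_gen p (Pr : 'M['F_p]_2 -> Prop) : prime p ->
  (forall g h, inSL2 g -> inSL2 h -> Pr g -> Pr h -> Pr (g *m h)) ->
  Pr (mat_s p) -> Pr (mat_t p) ->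
  forall h, inSL2 h -> Pr h.
Proof.
move=> pr_p HM Hs Ht.
pose Good h := inSL2 h /\ Pr h.
have GM g h : Good g -> Good h -> Good (g *m h).
  by move=> [dg pg] [dh ph]; split; [rewrite /inSL2 det_mulmx dg dh mulr1 | exact: HM].
have Gs : Good (mx2 0 (-1) 1 0).
  by split; rewrite -(mat_sE p) //; rewrite /inSL2 mat_sE det_mx2; ring.
have Gt : Good (mx2 1 1 0 1).
  by split; rewrite -(mat_tE p) //; rewrite /inSL2 mat_tE det_mx2; ring.
have GUn n : Good (mx2 1 (n.+1)%:R 0 1).
  elim: n => [|n IH] //.
  have -> : mx2 1 (n.+2)%:R 0 1 = mx2 (1 : 'F_p) (n.+1)%:R 0 1 *m mx2 1 1 0 1.
    by rewrite mx2_mul; apply: mx2_eq; rewrite ?mulr0 ?mul0r ?mulr1 ?mul1r ?addr0 ?add0r // -addn1 natrD addrC.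
  exact: GM.
have GU x : Good (mx2 1 x 0 1).
  have -> : x = ((x + p).-1.+1)%:R.
    have hp0 : (0 < x + p)%N by rewrite addn_gt0 (prime_gt0 pr_p) orbT.
    rewrite (prednK hp0).
    by rewrite natrD pchar_Fp_0 // addr0 natr_Zp.
  exact: GUn.
have Gs3 : Good (mx2 0 1 (-1) 0).
  have -> : mx2 0 1 (-1) 0 = mx2 0 (-1) 1 0 *m mx2 0 (-1) 1 0 *m mx2 (0 : 'F_p) (-1) 1 0.
    by rewrite !mx2_mul; apply: mx2_eq; ring.
  by apply: (GM) => //; apply: (GM).
have G1 a b c d : c != 0 -> a * d - b * c = 1 -> Good (mx2 a b c d).
  move=> c0 det1.
  have -> : mx2 a b c d = mx2 1 ((a - 1) / c) 0 1 *m
     (mx2 0 (-1) 1 0 *m mx2 1 (- c) 0 1 *m mx2 0 1 (-1) 0) *m mx2 1 ((d - 1) / c) 0 1.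
    have hb : b = (a * d - 1) / c.
      by rewrite -det1; field.
    by rewrite !mx2_mul; apply: mx2_eq; rewrite ?hb; field.
  by apply: (GM) => //; apply: (GM) => //; apply: (GM) => //; apply: (GM).
move=> h; rewrite /inSL2 (mx2_eta h) det_mx2.
set a := h 0 0; set b := h 0 1; set c := h 1 0; set d := h 1 1 => det1.
suff : Good (mx2 a b c d) by case.
have [c0|c0] := eqVneq c 0; last by case: (G1 a b c d c0 det1).
have d0 : d != 0.
  by apply: contra_eq_neq det1 => ->; rewrite c0 !mulr0 subr0 eq_sym oner_eq0.
have -> : mx2 a b c d = (mx2 a b c d *m mx2 0 (-1) 1 0) *m mx2 0 1 (-1) 0.
  by rewrite !mx2_mul; apply: mx2_eq; ring.
rewrite mx2_mul; apply: (GM) => //.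
apply: (G1); first by rewrite c0 mul0r add0r mulr1.
by rewrite c0 in det1 *; rewrite -[RHS]det1; ring.
Qed.

Theorem theorem2 (p : nat) (pr_p : prime p) (odd_p : odd p)
  (a : nat) (Ha : a = 1%N \/ qnr p a)
  (xi : 'M['F_p]_2 -> 'M[algC]_((rr p).+1))
  (Hxi : is_rep xi)
  (Hs : xi (mat_s p) = Smx p a) (Ht : xi (mat_t p) = Tmx p a)
  (gam : {rmorphism algC -> algC}) (g : nat)
  (Hg : (p.-1).-primitive_root (g%:R : 'F_p))
  (Hgam : gam (zeta p) = zeta p ^+ g) :
  let tau := fun x : algC => gam (gam x) in
  [/\ tau (theta p a 0) = theta p a 0,
      (forall j : 'I_(rr p).+1, exists k : 'I_(rr p).+1,
          tau (theta p a j) = theta p a k) &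
      exists P : 'M[algC]_((rr p).+1),
        [/\ is_perm_mx P,
            map_mx tau (Vmx p a) = P *m Vmx p a,
            (forall P' : 'M[algC]_((rr p).+1), is_perm_mx P' ->
                map_mx tau (Vmx p a) = P' *m Vmx p a -> P' = P) &
            (forall h : 'M['F_p]_2, inSL2 h ->
                map_mx tau (xi h) = P *m xi h *m invmx P)]].
Proof.
move=> tau.
have p_gt1 := prime_gt1 pr_p; have p_gt0 := prime_gt0 pr_p.
have hp := p_rr odd_p.
have a0 : (a%:R : 'F_p) != 0.
  case: Ha => [->|/andP[ha _]]; first exact: oner_neq0.
  by rewrite -(dvdn_pcharf (pchar_Fp pr_p)).
have g0 : (g%:R : 'F_p) != 0.
  apply/eqP => g0; have := prim_expr_order Hg; rewrite g0 expr0n.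
  have -> : (p.-1 == 0%N) = false by lia.
  by move/eqP; rewrite eq_sym oner_eq0.
have htauz n : tau (zeta p ^+ n) = zeta p ^+ (g * (g * n)).
  by rewrite /tau (rmorphXn gam n (zeta p)) Hgam -exprM (rmorphXn gam (g * n) (zeta p)) Hgam -exprM.
have theta_sig j : tau (theta p a j) = theta p a (sig p g j).
  rewrite /theta /eQ htauz; apply: zeta_F => //.
  have := sig_F g j pr_p; rewrite !natrM.
  by case=> ->; ring.
pose sg := fun j : 'I_(rr p).+1 => (inord (sig p g j) : 'I_(rr p).+1).
have sgE j : (sg j : nat) = sig p g j by rewrite /sg inordK // ltnS sig_le.
have sg_inj : injective sg.
  move=> i j /(congr1 (@nat_of_ord _)); rewrite !sgE => /(congr1 (theta p a)).
  rewrite -!theta_sig /tau => /fmorph_inj /fmorph_inj /(theta_inj pr_p odd_p a0).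
  by move=> H; apply: val_inj; apply: H; rewrite -ltnS.
pose s := perm sg_inj.
pose P : 'M[algC]_((rr p).+1) := perm_mx s.
have rr_gt0 : (0 < rr p)%N by lia.
have theta0 : theta p a 0 = 1 by rewrite /theta /eQ muln0 expr0.
have sg0 : sg 0 = 0.
  by apply: ord_inj; rewrite sgE /= /sig mul0n mod0n.
have sgeq0 j : (sg j == 0) = (j == 0).
  by rewrite -{1}sg0 (inj_eq sg_inj).
have iP : invmx P = perm_mx s^-1 by rewrite perm_mxV.
have conjP (A : 'M[algC]_((rr p).+1)) : P *m A *m invmx P = \matrix_(i, j) A (sg i) (sg j).
  rewrite iP -col_permE -row_permE; apply/matrixP => i j.
  by rewrite !mxE !permE.
have mapT (A : 'M[algC]_((rr p).+1)) : map_mx tau A = map_mx gam (map_mx gam A).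
  by apply/matrixP => i j; rewrite !mxE.
have tauX x n : tau (x ^+ n) = tau x ^+ n by rewrite /tau !rmorphXn.
split.
- by rewrite theta0 /tau !rmorph1.
- by move=> j; exists (sg j); rewrite theta_sig sgE.
have HV : map_mx tau (Vmx p a) = P *m Vmx p a.
  rewrite -row_permE; apply/matrixP => i j; rewrite !mxE permE.
  by rewrite tauX theta_sig sgE.
exists P; split => //.
- exact: perm_mx_is_perm.
- move=> P' /is_perm_mxP [s' ->]; rewrite HV => EQ.
  congr perm_mx; apply/permP => i.
  have := congr1 (fun M : 'M[algC]_((rr p).+1) => M i (inord 1)) EQ.
  rewrite -!row_permE !mxE inordK // !expr1 permE.
  move/(theta_inj pr_p odd_p a0) => H; apply: ord_inj; apply/esym/H; rewrite -ltnS //.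
case: Hxi => _ Hmul.
have tauM x y : tau (x * y) = tau x * tau y by rewrite /tau !rmorphM.
have tauD x y : tau (x + y) = tau x + tau y by rewrite /tau !rmorphD.
have tauV x : tau (x^-1) = (tau x)^-1 by rewrite /tau !fmorphV.
have tauN n : tau (n%:R) = n%:R by rewrite /tau !rmorph_nat.
have tauMn x n : tau (x *+ n) = tau x *+ n by rewrite /tau !rmorphMn.
have tauG : tau (GQ p a) = GQ p a.
  rewrite /GQ.
  have -> : tau (\sum_(x < p) eQ p a x) = \sum_(x < p) tau (eQ p a x) by rewrite /tau !rmorph_sum.
  pose f := fun x : 'I_p => Ordinal (ltn_pmod (x * g) p_gt0) : 'I_p.
  have finj : injective f.
    move=> x y /(congr1 (@nat_of_ord _)) /= /(Fp_eqmodE pr_p).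
    rewrite !natrM => /(mulIf g0) /(Fp_eqmod pr_p); rewrite !modn_small // => H.
    exact: ord_inj.
  rewrite [RHS](reindex_inj finj) /=; apply: eq_bigr => x _.
  rewrite /eQ htauz; apply: zeta_F => //.
  rewrite ?natrM ?natrX ?Fp_nat_mod // ?natrM ?natrX; ring.
have eB_sig i j : eB p a (sig p g i) (sig p g j) = tau (eB p a i j) \/
                  eB p a (sig p g i) (sig p g j) = (tau (eB p a i j))^-1.
  rewrite /eB htauz.
  have := sig_F g i pr_p; have := sig_F g j pr_p; rewrite !natrM.
  case=> Hj; case=> Hi; [left|right|right|left];
    (apply: zeta_F => // || apply: zeta_FN => //); rewrite !natrM Hi Hj; ring.
have sgeq0' (j : 'I_((rr p).+1)) : ((sg j : nat) == 0 :> nat) = ((j : nat) == 0 :> nat).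
  by have := sgeq0 j; rewrite -!val_eqE.
move=> h; apply: (SL2_gen (Pr := fun h => map_mx tau (xi h) = P *m xi h *m invmx P)) => //.
- move=> x y dx dy /= Ex Ey.
  rewrite Hmul // mapT !map_mxM -!mapT Ex Ey !mulmxA.
  by rewrite -(mulmxA (P *m xi x) (invmx P) P) mulVmx ?unitmx_perm // mulmx1.
- rewrite /= Hs conjP; apply/matrixP => i j; rewrite !mxE !sgeq0'.
  case: ifP => _; first by rewrite tauV tauG.
  case: ifP => _; first by rewrite tauM tauN tauV tauG.
  rewrite tauM tauD !tauV tauG; congr (_ * _); rewrite !sgE.
  by case: (eB_sig i j) => ->; rewrite ?invrK // addrC.
- rewrite /= Ht conjP; apply/matrixP => i j; rewrite !mxE.
  by rewrite (inj_eq sg_inj) tauMn theta_sig sgE.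
Qed.
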